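(* Let $\mathcal F$ be a saturated fusion system over a finite $p$-group $S$, and let $\mathcal E\le\mathcal F$ be a fusion subsystem (not necessarily saturated) over $T\le S$. Let $\mathcal H$ be a nonempty set of subgroups of $T$ closed under $\mathcal E$-conjugacy and under overgroups in $T$, and assume that for all $P\in\mathcal H$: (i) for each $\hat P\le T$ containing $P$ and each $\varphi\in\operatorname{Hom}_{\mathcal F}(\hat P,T)$, if $\varphi|_P\in\operatorname{Hom}_{\mathcal E}(P,T)$ then $\varphi\in\operatorname{Hom}_{\mathcal E}(\hat P,T)$; and (ii) for each $\varphi\in\operatorname{Hom}_{\mathcal F}(N_T(P),S)$ there are $R\le S$ with $R\ge\langle\varphi(N_T(P)),C_S(\varphi(P))\rangle$ and $\psi\in\operatorname{Hom}_{\mathcal F}(R,T)$ such that $\psi\varphi\in\operatorname{Hom}_{\mathcal E}(N_T(P),T)$. Then every $P\in\mathcal H$ that is fully normalized or fully centralized in $\mathcal E$ is receptive and fully centralized in $\mathcal E$ and in $\mathcal F$. If in addition (iii) $\operatorname{Inn}(T)\in\mathrm{Syl}_p(\operatorname{Aut}_{\mathcal E}(T))$, then $\mathcal E$ is $\mathcal H$-saturated.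
   Context: For a fusion system $\mathcal E$ over $R$ (not necessarily saturated) and $P\le R$: $P$ is fully normalized (resp. fully centralized) in $\mathcal E$ if $|N_R(P)|\ge|N_R(Q)|$ (resp. $|C_R(P)|\ge|C_R(Q)|$) for all $\mathcal E$-conjugates $Q$ of $P$; $P$ is fully automized if $\operatorname{Aut}_R(P)\in\mathrm{Syl}_p(\operatorname{Aut}_{\mathcal E}(P))$; $P$ is receptive in $\mathcal E$ if each $\varphi\in\operatorname{Iso}_{\mathcal E}(Q,P)$ extends to a morphism of $\mathcal E$ defined on $N_\varphi=\{x\in N_R(Q)\mid\varphi c_x^Q\varphi^{-1}\in\operatorname{Aut}_R(P)\}$. For a set $\mathcal H$ of subgroups closed under $\mathcal E$-conjugacy, $\mathcal E$ is $\mathcal H$-saturated if each member of $\mathcal H$ is $\mathcal E$-conjugate to a subgroup that is fully automized and receptive in $\mathcal E$. *)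

(* Defs.v *)
From mathcomp Require Import all_boot all_fingroup all_solvable.
Set Implicit Arguments. Unset Strict Implicit. Unset Printing Implicit Defensive.
Local Open Scope group_scope.

(* A (candidate) fusion system on a finite group type gT is given by the
   boolean predicate  F P f  meaning "f restricted to P is a morphism of F
   with domain P". *)
Definition fus_pred (gT : finGroupType) := {set gT} -> {ffun gT -> gT} -> bool.

Section Fusion.
Variable gT : finGroupType.
Implicit Types (F E : fus_pred gT) (P Q R S T : {group gT}).

Definition is_fusion_system (S : {group gT}) F : Prop :=
  [/\
      forall (P : {set gT}) (f g : {ffun gT -> gT}),
        {in P, f =1 g} -> F P f = F P g,
      forall (P : {set gT}) f, F P f ->
        [/\ group_set P, P \subset S, f @: P \subset S,
            ({in P &, {morph f : x y / x * y}}) & ({in P &, injective f})],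
      forall P (g : gT), P \subset S -> g \in S -> F P [ffun x => x ^ g],
      forall P Q f, F P f -> Q \subset P -> F Q f &
      ((forall (P : {set gT}) f g, F P f -> F (f @: P) g ->
        F P [ffun x => g (f x)]) /\
      (forall (P : {set gT}) f, F P f ->
        exists g, F (f @: P) g /\ {in P, cancel f g}))].

Definition fusion_subsystem (S T : {group gT}) F E : Prop :=
  [/\ T \subset S, is_fusion_system T E & forall P f, E P f -> F P f].

Definition fhom F (P Q : {set gT}) (f : {ffun gT -> gT}) : bool :=
  F P f && (f @: P \subset Q).

Definition fconj F (P Q : {set gT}) : bool :=
  [exists f : {ffun gT -> gT}, F P f && (f @: P == Q)].

Definition AutF F (P : {set gT}) : {set {perm gT}} :=
  [set a in Aut P | F P [ffun x => a x]].

Definition AutR (R P : {group gT}) : {set {perm gT}} :=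
  conj_aut P @: 'N_R(P).

(* Here R is the group over which F is a fusion system. *)
Definition fully_normalized F R P : Prop :=
  forall Q, fconj F P Q -> #|'N_R(Q)| <= #|'N_R(P)|.

Definition fully_centralized F R P : Prop :=
  forall Q, fconj F P Q -> #|'C_R(Q)| <= #|'C_R(P)|.

Definition fully_automized (p : nat) F R P : bool :=
  p.-Sylow(AutF F P) (AutR R P).

(* N_phi for phi : Q -> P an isomorphism: the x in N_R(Q) such that
   phi c_x phi^{-1} lies in Aut_R(P). *)
Definition Nphi R (Q P : {set gT}) (f : {ffun gT -> gT}) : {set gT} :=
  [set x in 'N_R(Q) |
    [exists y in 'N_R(P), [forall z in Q, f (z ^ x) == f z ^ y]]].

Definition receptive F R P : Prop :=
  forall Q (f : {ffun gT -> gT}), F Q f -> f @: Q = P ->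
    exists g : {ffun gT -> gT}, F (Nphi R Q P f) g /\ {in Q, g =1 f}.

Definition H_saturated (p : nat) F R (H : {set {group gT}}) : Prop :=
  forall P, P \in H ->
    exists Q, [/\ fconj F P Q, fully_automized p F R Q & receptive F R Q].

Definition saturated (p : nat) F S : Prop :=
  H_saturated p F S [set P : {group gT} | P \subset S].

End Fusion.

(* Main.v *)
Require Import Defs.
From mathcomp Require Import all_boot all_fingroup all_solvable.
Set Implicit Arguments. Unset Strict Implicit. Unset Printing Implicit Defensive.
Local Open Scope group_scope.


Section Basic.
Variables (gT : finGroupType) (R : {group gT}) (F : fus_pred gT).
Hypothesis FS : is_fusion_system R F.
Implicit Types (P Q X Y : {group gT}) (f g h : {ffun gT -> gT}).

Lemma fs_ext (P : {set gT}) f g : F P f -> {in P, f =1 g} -> F P g.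
Proof. by case: FS => e _ _ _ _ Pf fg; rewrite -(e _ _ _ fg). Qed.

Lemma fs_props (P : {set gT}) f : F P f ->
  [/\ group_set P, P \subset R, f @: P \subset R,
      ({in P &, {morph f : x y / x * y}}) & ({in P &, injective f})].
Proof. by case: FS => _ e _ _ _; apply: e. Qed.

Lemma fs_grp (P : {set gT}) f : F P f -> group_set P.
Proof. by case/fs_props. Qed.

Lemma fs_sub (P : {set gT}) f : F P f -> P \subset R.
Proof. by case/fs_props. Qed.

Lemma fs_imsub (P : {set gT}) f : F P f -> f @: P \subset R.
Proof. by case/fs_props. Qed.

Lemma fs_mem (P : {set gT}) f x : F P f -> x \in P -> f x \in R.
Proof. by move=> Pf Px; apply: (subsetP (fs_imsub Pf)); apply: imset_f. Qed.

Lemma fs_inj (P : {set gT}) f : F P f -> {in P &, injective f}.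
Proof. by case/fs_props. Qed.

Lemma fs_M (P : {set gT}) f : F P f -> {in P &, {morph f : x y / x * y}}.
Proof. by case/fs_props. Qed.

Lemma fs_card (P : {set gT}) f : F P f -> #|f @: P| = #|P|.
Proof. by move/fs_inj/card_in_imset. Qed.

Lemma fs_conj P (a : gT) : P \subset R -> a \in R -> F P [ffun x => x ^ a].
Proof. by case: FS => _ _ e _ _; apply: e. Qed.

Lemma fs_id P : P \subset R -> F P [ffun x => x].
Proof.
move=> sPR; apply: fs_ext (fs_conj sPR (group1 R)) _ => x _.
by rewrite !ffunE conjg1.
Qed.

Lemma fs_restr P Q f : F P f -> Q \subset P -> F Q f.
Proof. by case: FS => _ _ _ e _; apply: e. Qed.

Lemma fs_comp (P : {set gT}) f g : F P f -> F (f @: P) g ->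
  F P [ffun x => g (f x)].
Proof. by case: FS => _ _ _ _ [e _]; apply: e. Qed.

Lemma fs_inv (P : {set gT}) f : F P f ->
  exists g, F (f @: P) g /\ {in P, cancel f g}.
Proof. by case: FS => _ _ _ _ [_ e]; apply: e. Qed.

Lemma fs_imgrp (P : {set gT}) f : F P f -> group_set (f @: P).
Proof. by move/fs_inv=> [g [/fs_grp]]. Qed.

Definition fmorph P f (Pf : F P f) : {morphism P >-> gT} :=
  @Morphism _ _ P f (fs_M Pf).

Lemma fmorphE P f (Pf : F P f) x : fmorph Pf x = f x.
Proof. by []. Qed.

Lemma fs_J P f x y : F P f -> x \in P -> y \in P -> f (x ^ y) = f x ^ f y.
Proof. by move=> Pf Px Py; rewrite -!(fmorphE Pf) morphJ. Qed.

Lemma fs_inv_im (P : {set gT}) f g : {in P, cancel f g} -> g @: (f @: P) = P.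
Proof.
move=> fK; rewrite -imset_comp; apply/setP=> x; apply/imsetP/idP.
  by case=> y Py ->; rewrite /= fK.
by move=> Px; exists x => //=; rewrite fK.
Qed.

End Basic.


Section Two.
Variables (gT : finGroupType) (R : {group gT}) (F : fus_pred gT).
Hypothesis FS : is_fusion_system R F.
Implicit Types (P Q X Y : {group gT}) (f g h : {ffun gT -> gT}).

Lemma img_comp (P : {set gT}) f g :
  [ffun x => g (f x)] @: P = g @: (f @: P).
Proof. by rewrite -imset_comp; apply: eq_imset => x; rewrite ffunE. Qed.

Lemma Aut_im P (a : {perm gT}) : a \in Aut P -> a @: P = P.
Proof.
move=> Aa; apply/eqP; rewrite eqEcard card_imset ?leqnn ?andbT; last exact: perm_inj.
by apply/subsetP=> _ /imsetP[x Px ->]; apply: Aut_closed.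
Qed.

Lemma Aut_imf P (a : {perm gT}) : a \in Aut P -> [ffun x => a x] @: P = P.
Proof. by move=> Aa; rewrite -[RHS](Aut_im Aa); apply: eq_imset => x; rewrite ffunE. Qed.

Lemma fconjP (P Q : {set gT}) :
  reflect (exists f, F P f /\ f @: P = Q) (fconj F P Q).
Proof.
apply: (iffP existsP) => [[f /andP[Pf /eqP e]]|[f [Pf e]]]; exists f => //.
by rewrite Pf e eqxx.
Qed.

Lemma fconj_refl P : P \subset R -> fconj F P P.
Proof.
move=> sPR; apply/fconjP; exists [ffun x => x]; split; first exact: (fs_id FS).
by rewrite -{2}(imset_id P); apply: eq_imset => x; rewrite ffunE.
Qed.

Lemma fconj_sym P Q : fconj F P Q -> fconj F Q P.
Proof.
case/fconjP=> f [Pf e]; have [g [Qg gK]] := fs_inv FS Pf.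
by apply/fconjP; exists g; rewrite -e; split=> //; apply: fs_inv_im.
Qed.

Lemma fconj_trans (P Q U : {set gT}) : fconj F P Q -> fconj F Q U -> fconj F P U.
Proof.
case/fconjP=> f [Pf e]; case/fconjP=> g [Qg e'].
apply/fconjP; exists [ffun x => g (f x)]; split; last by rewrite img_comp e.
by apply: (fs_comp FS Pf); rewrite e.
Qed.

Lemma AutF_gs P : P \subset R -> group_set (AutF F P).
Proof.
move=> sPR; apply/group_setP; split.
  apply/setIdP; split; first exact: group1.
  apply: (fs_ext FS) (fs_id FS sPR) _ => x _.
  by rewrite !ffunE perm1.
move=> a b /setIdP[Aa Fa] /setIdP[Ab Fb]; apply/setIdP; split; first exact: groupM.
have := fs_comp FS Fa; rewrite Aut_imf // => /(_ _ Fb) Fab.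
by apply: (fs_ext FS) Fab _ => x _; rewrite !ffunE permM.
Qed.

Lemma AutR_morphim (U : {group gT}) P : AutR U P = conj_aut P @* 'N_U(P).
Proof. by rewrite morphimEsub // subsetIr. Qed.

Lemma AutR_sub (U : {group gT}) P : U \subset R -> P \subset R ->
  AutR U P \subset AutF F P.
Proof.
move=> sUR sPR; apply/subsetP=> _ /imsetP[x /setIP[Ux Nx] ->].
apply/setIdP; split; first exact: Aut_aut.
apply: (fs_ext FS) (fs_conj FS sPR (subsetP sUR x Ux)) _ => y Py.
by rewrite !ffunE norm_conj_autE.
Qed.

Lemma NphiP (U : {group gT}) (Q P : {set gT}) f x :
  reflect (x \in 'N_U(Q) /\ exists2 y, y \in 'N_U(P) & forall z, z \in Q -> f (z ^ x) = f z ^ y)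
    (x \in Nphi U Q P f).
Proof.
apply: (iffP setIdP) => [[Nx /existsP[y /andP[Ny /forallP H]]]|[Nx [y Ny H]]].
  by split=> //; exists y => // z Qz; have /implyP/(_ Qz)/eqP := H z.
split=> //; apply/existsP; exists y; rewrite Ny; apply/forallP => z.
by apply/implyP=> Qz; rewrite H.
Qed.

Lemma Nphi_gs (U : {group gT}) Q P f : F Q f -> f @: Q = P -> group_set (Nphi U Q P f).
Proof.
move=> Qf e; apply/group_setP; split.
  by apply/NphiP; split; [exact: group1 | exists 1 => // z _; rewrite !conjg1].
move=> x1 x2 /NphiP[N1 [y1 Ny1 H1]] /NphiP[N2 [y2 Ny2 H2]].
apply/NphiP; split; first exact: groupM.
exists (y1 * y2); first exact: groupM.
move=> z Qz; rewrite conjgM H2; last by rewrite memJ_norm //; case/setIP: N1.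
by rewrite H1 // conjgM.
Qed.

Lemma Nphi_cent (U : {group gT}) Q P f : Q \subset U -> 'C_U(Q) \subset Nphi U Q P f.
Proof.
move=> sQU; apply/subsetP=> x /setIP[Ux Cx]; apply/NphiP; split.
  by rewrite inE Ux (subsetP (cent_sub Q)).
by exists 1; [exact: group1 | move=> z Qz; rewrite conjg1 /conjg -(centP Cx z Qz) mulKg].
Qed.

End Two.


Section Transport.
Variables (gT : finGroupType) (R : {group gT}) (F : fus_pred gT) (p : nat).
Hypothesis FS : is_fusion_system R F.
Implicit Types (P Q X Y : {group gT}) (f g h : {ffun gT -> gT}).

Lemma transport X Y f (B : {group {perm gT}}) :
  F X f -> f @: X = Y -> fully_automized p F R Y ->
  B \subset AutF F X -> p.-group B ->
  exists f', [/\ F X f', f' @: X = Y &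
    forall b, b \in B -> exists2 y, y \in 'N_R(Y) &
      forall z, z \in X -> f' (b z) = f' z ^ y].
Proof.
move=> Xf eY faY sBA pB.
have sYR : Y \subset R by rewrite -eY; exact: (fs_imsub FS Xf).
pose m := fmorph FS Xf.
have injm : 'injm m by apply/injmP; exact: (fs_inj FS Xf).
have mX : m @* X = Y by rewrite morphimEdom.
pose af := Aut_isom injm (subxx X).
have sBAut : B \subset Aut X.
  by apply: subset_trans sBA _; apply/subsetP=> a /setIdP[].
have [psi [Ypsi psiK]] := fs_inv FS Xf.
rewrite eY in Ypsi.
have psiY : psi @: Y = X by rewrite -eY; exact: fs_inv_im.
have sB'A : af @* B \subset AutF F Y.
  apply/subsetP=> _ /morphimP[b _ Bb ->].
  have Ab := subsetP sBAut b Bb.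
  have /setIdP[_ Fb] := subsetP sBA b Bb.
  apply/setIdP; split; first by rewrite -mX; exact: Aut_Aut_isom.
  have F1 : F Y [ffun y => [ffun x => b x] (psi y)].
    by apply: (fs_comp FS Ypsi); rewrite psiY.
  have e1 : [ffun y => [ffun x => b x] (psi y)] @: Y = X.
    by rewrite img_comp psiY Aut_imf.
  have := fs_comp FS F1; rewrite e1 => /(_ _ Xf) F2.
  apply: (fs_ext FS F2) => y; rewrite -{1}eY => /imsetP[x Xx ->].
  rewrite !ffunE psiK //.
  by have := Aut_isomE injm (subxx X) Ab Xx.
have pB' : p.-group (af @* B) by apply: morphim_pgroup.
have sylY : p.-Sylow(Group (AutF_gs FS sYR)) (conj_aut Y @* 'N_R(Y))%G.
  by move: faY; rewrite /fully_automized AutR_morphim.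
have [a Aa sJ] := Sylow_Jsub sylY sB'A pB'.
have /setIdP[AutYa Fa] : a \in AutF F Y by [].
exists [ffun x => a (f x)]; split.
- have := fs_comp FS Xf; rewrite eY => /(_ _ Fa) F3.
  by apply: (fs_ext FS F3) => x _; rewrite !ffunE.
- by rewrite -[RHS](Aut_im AutYa) -eY -imset_comp; apply: eq_imset => x; rewrite ffunE.
move=> b Bb; have Ab := subsetP sBAut b Bb.
have : af b ^ a \in (conj_aut Y @* 'N_R(Y)) by apply: (subsetP sJ); rewrite memJ_conjg mem_morphim.
case/morphimP=> y Ny NRy eb; exists y => // z Xz.
have fzY : f z \in Y by rewrite -eY imset_f.
rewrite !ffunE -(@norm_conj_autE _ Y y (a (f z))) ?(Aut_closed AutYa) // -eb conjgE !permM permK.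
by have := Aut_isomE injm (subxx X) Ab Xz; rewrite /= => ->.
Qed.

End Transport.


Section Helpers.
Variables (gT : finGroupType) (R : {group gT}) (F : fus_pred gT).
Hypothesis FS : is_fusion_system R F.
Implicit Types (P Q X Y D : {group gT}) (f g h : {ffun gT -> gT}).

Lemma cent_map (U : {set gT}) D h (A C : {set gT}) : F D h -> A \subset D -> C \subset D ->
  C \subset 'C(A) -> h @: C \subset U -> #|C| <= #|'C_U(h @: A)|.
Proof.
move=> Dh sAD sCD cCA sCU.
rewrite -(card_in_imset (sub_in2 (subsetP sCD) (fs_inj FS Dh))).
apply: subset_leq_card; rewrite subsetI sCU /=.
apply/subsetP=> _ /imsetP[c Cc ->]; apply/centP=> _ /imsetP[a Aa ->].
have Dc := subsetP sCD c Cc; have Da := subsetP sAD a Aa.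
rewrite /commute -!(fs_M FS Dh) //.
by have /centP/(_ a Aa) := subsetP cCA c Cc => ->.
Qed.

Lemma norm_map D h (A : {set gT}) y : F D h -> A \subset D -> y \in D ->
  A :^ y \subset A -> h y \in 'N(h @: A).
Proof.
move=> Dh sAD Dy nAy; rewrite inE; apply/subsetP=> _ /imsetP[_ /imsetP[a Aa ->] ->].
rewrite -(fs_J FS Dh) ?(subsetP sAD a Aa) //; apply: imset_f.
by apply: (subsetP nAy); rewrite memJ_conjg.
Qed.

Lemma norm_sub (A : {set gT}) y : y \in 'N(A) -> A :^ y \subset A.
Proof. by rewrite inE. Qed.

Lemma Nphi_self X Q f : F X f -> f @: X = Q -> X \subset Nphi R X Q f.
Proof.
move=> Xf eQ; apply/subsetP=> x Xx; apply/NphiP; split.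
  by rewrite inE (subsetP (fs_sub FS Xf)) // (subsetP (normG X)).
have fxQ : f x \in Q by rewrite -eQ imset_f.
exists (f x).
  rewrite inE (subsetP (normG Q)) // andbT.
  by apply: (subsetP (fs_imsub FS Xf)); rewrite imset_f.
by move=> z Xz; rewrite (fs_J FS Xf).
Qed.

Lemma recept_cent X Q f : receptive F R Q -> F X f -> f @: X = Q ->
  #|'C_R(X)| <= #|'C_R(Q)|.
Proof.
move=> rQ Xf eQ; have [g [Mg gf]] := rQ X f Xf eQ.
pose M := Group (fs_grp FS Mg).
have Mg' : F M g by [].
rewrite -eQ -(eq_in_imset gf).
apply: (cent_map Mg') => //.
- exact: Nphi_self.
- by apply: Nphi_cent; exact: (fs_sub FS Xf).
- exact: subsetIr.
apply/subsetP=> _ /imsetP[c Cc ->]; apply: (fs_mem FS Mg).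
by apply: (subsetP (Nphi_cent (U:=R) Q f (fs_sub FS Xf))).
Qed.

End Helpers.

Lemma conj_eq_cent (gT : finGroupType) (A : {set gT}) (a b : gT) :
  (forall w, w \in A -> w ^ a = w ^ b) -> a * b^-1 \in 'C(A).
Proof.
move=> H; apply/centP=> w Aw; apply: commute_sym; apply/commgP/conjg_fixP.
by rewrite conjgM H // -conjgM mulgV conjg1.
Qed.


Section Main.
Variables (gT : finGroupType) (p : nat) (S T : {group gT}) (F E : fus_pred gT)
  (H : {set {group gT}}).
Hypotheses (pS : p.-group S) (FS : is_fusion_system S F) (satF : saturated p F S)
  (sTS : T \subset S) (ES : is_fusion_system T E) (EF : forall (P : {group gT}) f, E P f -> F P f)
  (HT : forall P : {group gT}, P \in H -> P \subset T)
  (Hconj : forall P Q : {group gT}, P \in H -> fconj E P Q -> Q \in H)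
  (Hi : forall P : {group gT}, P \in H ->
     forall (Phat : {group gT}) (f : {ffun gT -> gT}),
       P \subset Phat -> Phat \subset T ->
       fhom F Phat T f -> fhom E P T f -> fhom E Phat T f)
  (Hii : forall P : {group gT}, P \in H ->
     forall f : {ffun gT -> gT}, fhom F 'N_T(P) S f ->
       exists R : {group gT},
         [/\ R \subset S, <<(f @: 'N_T(P)) :|: 'C_S(f @: P)>> \subset R &
             exists g : {ffun gT -> gT},
               fhom F R T g /\ fhom E 'N_T(P) T [ffun x => g (f x)]]).

Lemma extQ P : P \in H -> exists (Q : {group gT}) (phi : {ffun gT -> gT}),
  [/\ F 'N_S(P) phi, phi @: P = Q & receptive F S Q].
Proof.
move=> HP; have sPT := HT HP; have sPS := subset_trans sPT sTS.
have [Q [cPQ faQ rQ]] : exists Q : {group gT}, [/\ fconj F P Q, fully_automized p F S Q & receptive F S Q].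
  by apply: satF; rewrite inE.
case/fconjP: cPQ => f0 [Pf0 e0].
have sB : (conj_aut P @* 'N_S(P))%G \subset AutF F P.
  by rewrite /= -AutR_morphim; apply: (AutR_sub FS (subxx S) sPS).
have pB : p.-group (conj_aut P @* 'N_S(P))%G.
  by apply: morphim_pgroup; apply: pgroupS pS; apply: subsetIl.
have [f [Pf ef Hf]] := transport FS Pf0 e0 faQ sB pB.
have sN : 'N_S(P) \subset Nphi S P Q f.
  apply/subsetP=> x NSx; apply/NphiP; split=> //.
  have Nx : x \in 'N(P) by case/setIP: NSx.
  have [y Ny Hy] := Hf (conj_aut P x) (mem_morphim _ Nx NSx).
  by exists y => // z Pz; rewrite -Hy ?norm_conj_autE.
have [g [Mg gf]] := rQ P f Pf ef.
pose M := Group (fs_grp FS Mg).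
exists Q, g; split=> //.
- exact: (fs_restr FS (P := M)).
by rewrite (eq_in_imset gf).
Qed.

Lemma part1 P : P \in H -> fully_normalized E T P \/ fully_centralized E T P ->
  exists (Q : {group gT}) (phi : {ffun gT -> gT}),
  [/\ F 'N_S(P) phi, phi @: P = Q, receptive F S Q,
      #|'C_S(Q)| = #|'C_S(P)| & 'C_T(P) = 'C_S(P)].
Proof.
move=> HP fnc; have sPT := HT HP; have sPS := subset_trans sPT sTS.
have [Q [phi [Nphi eQ rQ]]] := extQ HP.
have sNN : 'N_T(P) \subset 'N_S(P) by apply: setSI.
have sPNT : P \subset 'N_T(P) by rewrite subsetI sPT normG.
have sPNS : P \subset 'N_S(P) by rewrite subsetI sPS normG.
have NTphi : F 'N_T(P) phi := fs_restr FS Nphi sNN.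
have Fphi_T : fhom F 'N_T(P) S phi.
  by apply/andP; split=> //; exact: (fs_imsub FS NTphi).
have [R' [sR'S sgen [g [/andP[R'g gT'] /andP[Eh hT]]]]] := Hii HP Fphi_T.
set h := [ffun x => g (phi x)] in Eh hT.
have c1 : #|'C_S(P)| <= #|'C_S(Q)|.
  rewrite -eQ; apply: (cent_map FS (U := S) Nphi) => //.
  - by apply: setIS; apply: cent_sub.
  - exact: subsetIr.
  apply: (subset_trans _ (fs_imsub FS Nphi)); apply: imsetS.
  by apply: setIS; apply: cent_sub.
have sU : (phi @: 'N_T(P)) :|: 'C_S(phi @: P) \subset R' := subset_trans (sub_gen (subxx _)) sgen.
have sQR : Q \subset R'.
  by rewrite -eQ; apply: subset_trans (imsetS _ sPNT) (subset_trans (subsetUl _ _) sU).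
have sCR : 'C_S(Q) \subset R'.
  by rewrite -eQ; exact: subset_trans (subsetUr _ _) sU.
have eP' : g @: Q = h @: P by rewrite /h img_comp eQ.
have c2 : #|'C_S(Q)| <= #|'C_T(h @: P)|.
  rewrite -eP'; apply: (cent_map FS (U := T) R'g) => //.
  - exact: subsetIr.
  by apply: (subset_trans _ gT'); apply: imsetS.
have EP' : fconj E P (h @: P).
  by apply/fconjP; exists h; split=> //; exact: (fs_restr ES (P := 'N_T(P)%G)).
have c3 : #|'C_T(h @: P)| <= #|'C_T(P)|.
  case: fnc => [fnP | fcP]; last first.
    have := fcP (Group (fs_imgrp ES (fs_restr ES (P := 'N_T(P)%G) Eh sPNT))).
    by apply.
  have := fnP (Group (fs_imgrp ES (fs_restr ES (P := 'N_T(P)%G) Eh sPNT))) EP'.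
  rewrite /= => cardN.
  have hN : h @: 'N_T(P) \subset 'N_T(h @: P).
    apply/subsetP=> _ /imsetP[y Ny ->]; rewrite inE.
    rewrite (subsetP hT) ?imset_f //=.
    apply: (norm_map ES Eh) => //; apply: norm_sub; by case/setIP: Ny.
  have eN : h @: 'N_T(P) = 'N_T(h @: P).
    apply/eqP; rewrite eqEcard hN (fs_card ES Eh); exact: cardN.
  have sC : 'C_T(h @: P) \subset h @: 'C_T(P).
    apply/subsetP=> w Cw.
    have : w \in 'N_T(h @: P).
      by apply: (subsetP (setIS T (cent_sub _))).
    rewrite -eN => /imsetP[n Nn ew]; apply/imsetP; exists n => //.
    have Tn : n \in T by case/setIP: Nn.
    rewrite inE Tn /=.
    apply/centP=> z Pz; have Nz := subsetP sPNT z Pz.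
    apply: (fs_inj ES Eh); rewrite ?groupM // !(fs_M ES Eh) //.
    have /centP/(_ (h z)) := (subsetP (subsetIr T _) w Cw).
    by rewrite -ew; apply; rewrite imset_f.
  by apply: leq_trans (subset_leq_card sC) (leq_imset_card _ _).
have c4 : #|'C_T(P)| <= #|'C_S(P)| by apply: subset_leq_card; apply: setSI.
have eqTS : #|'C_T(P)| = #|'C_S(P)|.
  by apply/eqP; rewrite eqn_leq c4 (leq_trans c1 (leq_trans c2 c3)).
exists Q, phi; split=> //.
  by apply/eqP; rewrite eqn_leq c1 -eqTS (leq_trans c2 c3).
by apply/eqP; rewrite eqEcard setSI //= eqTS leqnn.
Qed.

Lemma fconj_EF (P Q : {group gT}) : fconj E P Q -> fconj F P Q.
Proof. by case/fconjP=> f [Pf e]; apply/fconjP; exists f; split=> //; apply: EF. Qed.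

Lemma recF P : P \in H -> fully_normalized E T P \/ fully_centralized E T P ->
  receptive F S P.
Proof.
move=> HP fnc; have sPT := HT HP; have sPS := subset_trans sPT sTS.
have [Q [phi [NF eQ rQ eC _]]] := part1 HP fnc.
have sPNS : P \subset 'N_S(P) by rewrite subsetI sPS normG.
have f1 : forall y, y \in 'N_S(P) -> phi y \in 'N_S(Q).
  move=> y Ny; rewrite inE (fs_mem FS NF Ny) -eQ /=.
  apply: (norm_map FS NF) => //; apply: norm_sub; by case/setIP: Ny.
have f2 : phi @: 'C_S(P) = 'C_S(Q).
  have sCN : 'C_S(P) \subset 'N_S(P) by apply: setIS; apply: cent_sub.
  apply/eqP; rewrite eqEcard (card_in_imset (sub_in2 (subsetP sCN) (fs_inj FS NF))) eC leqnn andbT.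
  apply/subsetP=> _ /imsetP[c Cc ->]; rewrite inE (fs_mem FS NF (subsetP sCN c Cc)) /=.
  rewrite -eQ; apply/centP=> _ /imsetP[z Pz ->].
  rewrite /commute -!(fs_M FS NF) ?(subsetP sCN c Cc) ?(subsetP sPNS z Pz) //.
  by case/setIP: Cc => _ /centP/(_ z Pz) ->.
move=> X chi Xchi echi.
have sXS : X \subset S := fs_sub FS Xchi.
have Pphi : F P phi := fs_restr FS NF sPNS.
pose om := [ffun x => phi (chi x)].
have Xom : F X om by apply: (fs_comp FS Xchi); rewrite echi.
have eom : om @: X = Q by rewrite /om img_comp echi.
have [th [Mth thom]] := rQ X om Xom eom.
pose M := Group (Nphi_gs S Xchi echi).
have NM : forall x, x \in M -> exists2 y, y \in 'N_S(P) & forall z, z \in X ->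
    om (z ^ x) = om z ^ phi y /\ chi (z ^ x) = chi z ^ y.
  move=> x /NphiP[Nx [y Ny Hy]]; exists y => // z Xz.
  have chiP : chi z \in P by rewrite -echi imset_f.
  rewrite !ffunE Hy // (fs_J FS NF) //; exact: (subsetP sPNS).
have sMM : M \subset Nphi S X Q om.
  apply/subsetP=> x Mx; apply/NphiP; split; first by case/NphiP: Mx.
  have [y Ny Hy] := NM x Mx; exists (phi y); first exact: f1.
  by move=> z Xz; case: (Hy z Xz).
pose M2 := Group (fs_grp FS Mth).
have Mth2 : F M2 th by [].
have Mth' : F M th := fs_restr FS (P := M2) Mth sMM.
have sXM2 : X \subset M2 := Nphi_self FS Xom eom.
have key : th @: M \subset phi @: 'N_S(P).
  apply/subsetP=> _ /imsetP[x Mx ->].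
  have [y Ny Hy] := NM x Mx.
  have M2x : x \in M2 := subsetP sMM x Mx.
  have NXx : x \in 'N(X) by case/NphiP: Mx => /setIP[].
  have cc : th x * (phi y)^-1 \in 'C(Q).
    apply: conj_eq_cent => w; rewrite -eom => /imsetP[z Xz ->].
    have M2z := subsetP sXM2 z Xz.
    rewrite -thom // -(fs_J FS Mth2) // thom; last by rewrite memJ_norm.
    by rewrite thom //; case: (Hy z Xz).
  have cS : th x * (phi y)^-1 \in 'C_S(Q).
    by rewrite inE cc andbT groupM ?groupV ?(fs_mem FS Mth) // (subsetP (subsetIl _ _) _ (f1 y Ny)).
  rewrite -f2 in cS; case/imsetP: cS => c Cc ec.
  have Nc : c \in 'N_S(P) by apply: (subsetP (setIS S (cent_sub P))).
  apply/imsetP; exists (c * y); first exact: groupM.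
  by rewrite (fs_M FS NF) // -ec mulgKV.
have [io [Iio ioK]] := fs_inv FS NF.
pose G1 := Group (fs_imgrp FS NF).
pose G2 := Group (fs_imgrp FS Mth').
have Iio' : F G2 io := fs_restr FS (P := G1) (Q := G2) Iio key.
have := fs_comp FS Mth' Iio' => Fg.
exists [ffun x => io (th x)]; split=> // z Xz.
rewrite ffunE thom // ffunE ioK //.
by apply: (subsetP sPNS); rewrite -echi imset_f.
Qed.

Lemma recE P : P \in H -> fully_normalized E T P \/ fully_centralized E T P ->
  receptive E T P.
Proof.
move=> HP fnc; have sPT := HT HP; have sPS := subset_trans sPT sTS.
have [Q [phi [NF eQ rQ eC eCT]]] := part1 HP fnc.
move=> X chi Xchi echi.
have XchiF : F X chi := EF Xchi.
have [g [Mg gchi]] := recF HP fnc XchiF echi.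
pose ME := Group (Nphi_gs T Xchi echi).
pose MS := Group (fs_grp FS Mg).
have MgS : F MS g by [].
have sMM : ME \subset MS.
  apply/subsetP=> x /NphiP[Nx [t Nt Ht]]; apply/NphiP; split.
    exact: (subsetP (setSI _ sTS)).
  by exists t => //; exact: (subsetP (setSI _ sTS)).
have MEg : F ME g := fs_restr FS MgS sMM.
have sXMS : X \subset MS := Nphi_self FS XchiF echi.
have sMT : ME \subset T.
  by apply/subsetP=> x /NphiP[/setIP[]].
have gT' : g @: ME \subset T.
  apply/subsetP=> _ /imsetP[x Mx ->].
  have [Nx [t Nt Ht]] := NphiP _ _ _ _ _ Mx.
  have Tt : t \in T by case/setIP: Nt.
  have cc : g x * t^-1 \in 'C(P).
    apply: conj_eq_cent => w; rewrite -echi => /imsetP[z Xz ->].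
    have MSz := subsetP sXMS z Xz.
    have NXx : x \in 'N(X) by case/setIP: Nx.
    rewrite -gchi // -(fs_J FS MgS MSz (subsetP sMM x Mx)) gchi ?Ht ?gchi //.
    by rewrite memJ_norm.
  have cS : g x * t^-1 \in 'C_S(P).
    by rewrite inE cc andbT groupM ?groupV ?(fs_mem FS MgS (subsetP sMM x Mx)) ?(subsetP sTS).
  rewrite -eCT in cS; case/setIP: cS => cT _.
  by rewrite -(mulgKV t (g x)) groupM.
have HX : X \in H.
  apply: (Hconj HP); apply: (fconj_sym ES).
  by apply/fconjP; exists chi.
have := Hi HX (Phat := ME) (f := g) (Nphi_self ES Xchi echi) sMT.
rewrite /fhom MEg gT' => /(_ isT).
have Xg : E X g by apply: (fs_ext ES Xchi) => z Xz; rewrite gchi.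
have gX : g @: X = P by rewrite (eq_in_imset gchi).
rewrite Xg gX sPT => /(_ isT) /andP[Eg _].
by exists g.
Qed.

Lemma fcF P : P \in H -> fully_normalized E T P \/ fully_centralized E T P ->
  fully_centralized F S P.
Proof.
move=> HP fnc; have sPT := HT HP; have sPS := subset_trans sPT sTS.
have [Q [phi [NF eQ rQ eC eCT]]] := part1 HP fnc.
have sPNS : P \subset 'N_S(P) by rewrite subsetI sPS normG.
move=> Q0 cPQ0.
have cPQ : fconj F P Q by apply/fconjP; exists phi; split=> //; exact: (fs_restr FS (P := 'N_S(P)%G) NF sPNS).
have := fconj_trans FS (fconj_sym FS cPQ0) cPQ.
case/fconjP=> chi [Xchi echi].
by rewrite -eC; apply: (recept_cent FS rQ Xchi echi).
Qed.

Lemma fcE P : P \in H -> fully_normalized E T P \/ fully_centralized E T P ->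
  fully_centralized E T P.
Proof.
move=> HP fnc.
have [Q [phi [NF eQ rQ eC eCT]]] := part1 HP fnc.
move=> Q0 cPQ0; rewrite eCT.
apply: leq_trans (fcF HP fnc (fconj_EF cPQ0)).
by apply: subset_leq_card; apply: setSI.
Qed.

Lemma fn_exists (X : {group gT}) : X \subset T ->
  exists2 X' : {group gT}, fconj E X X' & fully_normalized E T X'.
Proof.
move=> sXT.
case: (@arg_maxnP _ X (fun Y : {group gT} => fconj E X Y) (fun Y : {group gT} => #|'N_T(Y)|) (fconj_refl ES sXT)).
move=> Y cXY maxY; exists Y => // Z cYZ.
exact: maxY (fconj_trans ES cXY cYZ).
Qed.

Hypothesis Hover : forall P Q : {group gT}, P \in H -> P \subset Q -> Q \subset T -> Q \in H.
Hypothesis iii : p.-Sylow(AutF E T) (AutR T T).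

Lemma FA P : P \in H -> fully_normalized E T P -> fully_automized p E T P.
Proof.
have pT : p.-group T := pgroupS sTS pS.
have [n] := ubnP (#|T| - #|P|); elim: n P => // n IH P ltn HP fnP.
have sPT := HT HP.
case: (eqVproper sPT) => [ePT | prPT].
  by have -> : P = T by apply: val_inj.
have prN : P \proper 'N_T(P) := nilpotent_proper_norm (pgroup_nil pT) prPT.
pose N := 'N_T(P)%G.
have sPN : P \subset N by rewrite subsetI sPT normG.
have sNT : N \subset T := subsetIl _ _.
pose G := Group (AutF_gs ES sPT).
pose A0 := (conj_aut P @* 'N_T(P))%G.
have sAG : A0 \subset G by rewrite /= -AutR_morphim; exact: (AutR_sub ES (subxx T) sPT).
have pA0 : p.-group A0 by apply: morphim_pgroup; apply: pgroupS pT; apply: subsetIl.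
apply/idPn => nsyl.
have [D sylD sAD] := Sylow_superset sAG pA0.
have pD := pHall_pgroup sylD.
have prAD : A0 \proper D.
  rewrite properEneq sAD andbT; apply/eqP => eAD.
  by move: nsyl; rewrite /fully_automized AutR_morphim /= eAD sylD.
have := nilpotent_proper_norm (pgroup_nil pD) prAD.
case/properP=> _ [al NDal nAal].
have Dal : al \in D by case/setIP: NDal.
have NAal : al \in 'N(A0) by case/setIP: NDal.
have Gal : al \in G := subsetP (pHall_sub sylD) al Dal.
have /setIdP[Aal Fal] : al \in AutF E P by [].
have pal : p.-elt al := mem_p_elt pD Dal.
pose fa := [ffun x => al x].
have efa : fa @: P = P by rewrite Aut_imf.
have sNphi : 'N_T(P) \subset Nphi T P P fa.
  apply/subsetP=> x NTx; apply/NphiP; split=> //.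
  have Nx : x \in 'N(P) by case/setIP: NTx.
  have cA : conj_aut P x \in A0 := mem_morphim _ Nx NTx.
  have : conj_aut P x ^ al \in A0 by rewrite memJ_norm.
  case/morphimP=> y Ny NTy ey; exists y => // z Pz.
  rewrite !ffunE -(@norm_conj_autE _ P y (al z)) ?(Aut_closed Aal) // -ey.
  by rewrite conjgE !permM permK norm_conj_autE.
have [ab [Mab abfa]] := recE HP (or_introl fnP) Fal efa.
pose M := Group (fs_grp ES Mab).
have Nab : E N ab := fs_restr ES (P := M) Mab sNphi.
have abP : ab @: P = P by rewrite (eq_in_imset abfa).
have abN : ab @: N \subset N.
  apply/subsetP=> _ /imsetP[y Ny ->]; rewrite inE (fs_mem ES Nab Ny) /=.
  rewrite -[in X in _ \in X]abP; apply: (norm_map ES Nab) => //; apply: norm_sub; by case/setIP: Ny.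
pose ap := perm_in (fs_inj ES Nab) abN.
have apE : {in N, ap =1 ab} := perm_inE (fs_inj ES Nab) abN.
have AutNap : ap \in Aut N.
  rewrite inE perm_in_on /=; apply/morphicP=> x y Nx Ny.
  by rewrite !apE ?groupM // (fs_M ES Nab).
pose GN := Group (AutF_gs ES sNT).
have GNap : ap \in GN.
  apply/setIdP; split=> //; apply: (fs_ext ES Nab) => x Nx; by rewrite ffunE apE.
have apP : forall z, z \in P -> ap z = al z.
  by move=> z Pz; rewrite apE ?(subsetP sPN) // abfa // ffunE.
have stab : ap \in 'N(P | 'P).
  apply/astabsP=> x; change ((ap x \in P) = (x \in P)); apply/idP/idP => [apx | Px]; last first.
    by move: (Aut_closed Aal Px); rewrite -(apP x Px).
  have : ap x \in al @: P by rewrite Aut_im.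
  case/imsetP=> z Pz; rewrite -apP // => /perm_inj ->; exact: Pz.
have ral : restr_perm P ap = al.
  apply/permP=> x; case: (boolP (x \in P)) => Px.
    by rewrite restr_permE // apP.
  by rewrite (out_perm (restr_perm_on P ap)) // (out_Aut Aal).
pose be := ap.`_p.
have GNbe : be \in GN by rewrite /be /constt groupX.
have stbe : be \in 'N(P | 'P) by rewrite /be /constt groupX.
have beP : forall z, z \in P -> be z = al z.
  move=> z Pz; rewrite -(restr_permE stbe Pz).
  have := morph_constt (restr_perm_morphism P) p stab.
  by rewrite /= ral (constt_p_elt pal) => e; rewrite /be e.
have sNTN : N \subset T := sNT.
have [N' cNN' fnN'] := fn_exists sNT.
have HN : N \in H := Hover HP sPN sNT.
have HN' : N' \in H := Hconj HN cNN'.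
case/fconjP: (cNN') => chi0 [Nchi0 echi0].
have cardN' : #|N'| = #|N| by rewrite -echi0 (fs_card ES Nchi0).
have faN' : fully_automized p E T N'.
  apply: IH => //; rewrite cardN'.
  have ltPN : #|P| < #|N| by apply: proper_card.
  have leNT : #|N| <= #|T| := subset_leq_card sNT.
  have h1 := ltn_sub2l (leq_trans ltPN leNT) ltPN.
  by rewrite ltnS in ltn; exact: leq_trans h1 ltn.
have sB : <[be]>%G \subset AutF E N by change (<[be]> \subset GN); rewrite cycle_subG.
have pB : p.-group <[be]>%G by exact: p_elt_constt.
have [chi [Nchi echi Hchi]] := transport ES Nchi0 echi0 faN' sB pB.
have [y NTy Hy] := Hchi be (cycle_id be).
pose P' := chi @: P.
have Pchi : E P chi := fs_restr ES (P := N) Nchi sPN.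
have cPP' : fconj E P P' by apply/fconjP; exists chi.
have cardNP' := fnP (Group (fs_imgrp ES Pchi)) cPP'.
have sN'N : N' \subset 'N_T(P').
  rewrite -echi; apply/subsetP=> _ /imsetP[m Nm ->].
  rewrite inE (fs_mem ES Nchi Nm) /=.
  apply: (norm_map ES Nchi) => //; apply: norm_sub; by case/setIP: Nm.
have eN' : N' :=: 'N_T(P').
  apply/eqP; rewrite eqEcard sN'N cardN'; exact: cardNP'.
have yN' : y \in N'.
  rewrite eN' inE; case/setIP: NTy => Ty _; rewrite Ty /=.
  rewrite inE; apply/subsetP=> _ /imsetP[_ /imsetP[z Pz ->] ->].
  rewrite -Hy ?(subsetP sPN) // beP //; apply: imset_f; exact: (Aut_closed Aal).
rewrite -echi in yN'; case/imsetP: yN' => n0 Nn0 ey.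
have Nn0P : n0 \in 'N(P) by case/setIP: Nn0.
have eal : al = conj_aut P n0.
  apply: (eq_Aut Aal) => [|z Pz]; first exact: Aut_aut.
  rewrite norm_conj_autE //.
  have Nz := subsetP sPN z Pz.
  apply: (fs_inj ES Nchi); first exact: (subsetP sPN _ (Aut_closed Aal Pz)).
    by rewrite groupJ.
  by rewrite -beP // Hy // ey (fs_J ES Nchi).
by case/negP: nAal; rewrite eal mem_morphim.
Qed.

End Main.


Theorem lemma1p10 (gT : finGroupType) (p : nat) (S T : {group gT})
    (F E : fus_pred gT) (H : {set {group gT}}) :
  prime p -> p.-group S ->
  is_fusion_system S F -> saturated p F S ->
  fusion_subsystem S T F E ->
  H != set0 ->
  (forall P : {group gT}, P \in H -> P \subset T) ->
  (forall P Q : {group gT}, P \in H -> fconj E P Q -> Q \in H) ->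
  (forall P Q : {group gT}, P \in H -> P \subset Q -> Q \subset T -> Q \in H) ->
  (* (i) *)
  (forall P : {group gT}, P \in H ->
     forall (Phat : {group gT}) (f : {ffun gT -> gT}),
       P \subset Phat -> Phat \subset T ->
       fhom F Phat T f -> fhom E P T f -> fhom E Phat T f) ->
  (* (ii) *)
  (forall P : {group gT}, P \in H ->
     forall f : {ffun gT -> gT}, fhom F 'N_T(P) S f ->
       exists R : {group gT},
         [/\ R \subset S, <<(f @: 'N_T(P)) :|: 'C_S(f @: P)>> \subset R &
             exists g : {ffun gT -> gT},
               fhom F R T g /\ fhom E 'N_T(P) T [ffun x => g (f x)]]) ->
  (forall P : {group gT}, P \in H ->
     fully_normalized E T P \/ fully_centralized E T P ->
     [/\ receptive E T P, fully_centralized E T P,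
         receptive F S P & fully_centralized F S P])
  /\
  ((* (iii) *) p.-Sylow(AutF E T) (AutR T T) -> H_saturated p E T H).
Proof.
move=> _ pS FS satF [sTS ES EF] _ HT Hconj Hover Hi Hii; split.
  move=> P HP fnc; split.
  - exact: (recE pS FS satF sTS ES EF HT Hconj Hi Hii HP fnc).
  - exact: (fcE pS FS satF sTS ES EF HT Hii HP fnc).
  - exact: (recF pS FS satF sTS ES HT Hii HP fnc).
  - exact: (fcF pS FS satF sTS ES HT Hii HP fnc).
move=> iii P HP.
have [P' cPP' fnP'] := fn_exists ES (HT P HP).
have HP' : P' \in H := Hconj P P' HP cPP'.
exists P'; split=> //.
  exact: (FA pS FS satF sTS ES EF HT Hconj Hi Hii Hover iii HP' fnP').
exact: (recE pS FS satF sTS ES EF HT Hconj Hi Hii HP' (or_introl fnP')).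
Qed.
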